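(* Let $D$ be finite or countably infinite, let $(\rho^0_{kl})_{k,l=1}^D$ be the matrix of a density operator (positive semidefinite, trace one) in some orthonormal basis, and let $(U_{mn})_{m,n=1}^D$ be a unitary matrix. Define $\mu_n=\sum_k|U_{nk}|^2\rho^0_{kk}$, $$\nu_{mn}=\sum_{k\neq l}U_{mk}U_{ml}^*U_{nk}^*U_{nl}|\rho^0_{kl}|^2,\qquad \tilde\nu_{mn}=\sum_{k,l}U_{mk}U_{ml}^*U_{nk}^*U_{nl}|\rho^0_{kl}|^2 .$$ Then for all $m,n$, $\nu_{mn}\le\tilde\nu_{mn}\le\mu_m\mu_n$.
   Context: The quantities $\nu_{mn}$ and $\tilde\nu_{mn}$ are real numbers (each sum is invariant under complex conjugation combined with exchanging $k$ and $l$). *)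

(* Defs.v *)
From HB Require Import structures.
From mathcomp Require Import all_boot all_order all_algebra.
From mathcomp Require Import complex.
From mathcomp Require Import all_classical all_reals all_analysis.
Set Implicit Arguments. Unset Strict Implicit. Unset Printing Implicit Defensive.
Import Order.TTheory GRing.Theory Num.Theory.
Import numFieldNormedType.Exports.
Local Open Scope ring_scope.

(* Index set: [D = Some d] means {0,...,d-1} (finite dimension d);
   [D = None] means all of nat (countably infinite dimension). *)
Definition idx (D : option nat) (k : nat) : bool :=
  if D is Some d then (k < d)%N else true.

Section Sums.
Variable R : realType.

Definition psum (D : option nat) (f : nat -> R[i]) (N : nat) : R[i] :=
  \sum_(k < N | idx D k) f k.

Definition sum_to (D : option nat) (f : nat -> R[i]) (s : R[i]) : Prop :=
  ((fun N : nat => (complex.Re (psum D f N) : R)) @ \oo --> (complex.Re s : R))%classic /\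
  ((fun N : nat => (complex.Im (psum D f N) : R)) @ \oo --> (complex.Im s : R))%classic.

Definition dsum_to (D : option nat) (F : nat -> nat -> R[i]) (s : R[i]) : Prop :=
  exists g : nat -> R[i], (forall k, sum_to D (F k) (g k)) /\ sum_to D g s.

(* matrix of a density operator: positive semidefinite (every finite section
   is PSD, i.e. x^* rho x >= 0 for every finitely supported x) and trace one *)
Definition density_matrix (D : option nat) (rho : nat -> nat -> R[i]) : Prop :=
  (forall (N : nat) (x : nat -> R[i]),
     0 <= \sum_(k < N | idx D k) \sum_(l < N | idx D l)
            (x k)^* * rho k l * x l) /\
  sum_to D (fun k => rho k k) 1.

Definition unitary_matrix (D : option nat) (U : nat -> nat -> R[i]) : Prop :=
  forall m n, idx D m -> idx D n ->
    sum_to D (fun k => U m k * (U n k)^*) (m == n)%:R /\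
    sum_to D (fun k => (U k m)^* * U k n) (m == n)%:R.

End Sums.

(* Main.v *)
Require Import Defs.
From HB Require Import structures.
From mathcomp Require Import all_boot all_order all_algebra.
From mathcomp Require Import complex.
From mathcomp Require Import all_classical all_reals all_analysis.
From mathcomp Require Import ring lra.
Import Order.TTheory GRing.Theory Num.Theory.
Import numFieldNormedType.Exports.
Local Open Scope ring_scope.
Set Implicit Arguments. Unset Strict Implicit.

Section Real.
Variable R : realType.
Variable D : option nat.

Definition Qf (u : nat -> R) k : R := if idx D k then u k else 0.
Definition Ps (u : nat -> R) N : R := \sum_(0 <= k < N) Qf u k.
Definition rs (u : nat -> R) (s : R) : Prop := (Ps u @ \oo --> s)%classic.

Lemma Ps_split u (a b : nat) : (a <= b)%N -> Ps u b = Ps u a + \sum_(a <= k < b) Qf u k.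
Proof. by move=> ab; rewrite /Ps (big_cat_nat (leq0n a) ab). Qed.

Lemma Ps_mono u : (forall k, idx D k -> 0 <= u k) ->
  {homo Ps u : a b / (a <= b)%N >-> a <= b}.
Proof.
move=> h a b ab; rewrite (Ps_split u ab) lerDl; apply: sumr_ge0 => k _.
by rewrite /Qf; case: ifP => // /h.
Qed.

Lemma Ps_le_lim c C : (forall k, idx D k -> 0 <= c k) -> rs c C ->
  forall N, Ps c N <= C.
Proof.
move=> h hc N; apply: (ler_cvg_to (cvg_cst (Ps c N)) hc).
near=> M; apply: Ps_mono => //; near: M; exact: nbhs_infty_ge.
Unshelve. all: by end_near.
Qed.

Lemma Ps_diff_le u c a b : (forall k, idx D k -> `|u k| <= c k) -> (a <= b)%N ->
  `|Ps u b - Ps u a| <= Ps c b - Ps c a.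
Proof.
move=> h ab; rewrite (Ps_split u ab) (Ps_split c ab) (addrC (Ps u a)) (addrC (Ps c a)) !addrK.
apply: (le_trans (ler_norm_sum _ _ _)); apply: ler_sum => k _.
by rewrite /Qf; case: ifP => [/h//|]; rewrite normr0.
Qed.

Lemma rs_ex u c M : (forall k, idx D k -> `|u k| <= c k) -> (forall N, Ps c N <= M) ->
  exists s, rs u s.
Proof.
move=> h hM.
have c0 k : idx D k -> 0 <= c k by move=> /h; apply: le_trans.
have hc : cvgn (Ps c).
  apply: nondecreasing_is_cvgn; first exact: Ps_mono.
  by exists M => _ [N _ <-].
pose v k := u k + c k.
have v0 k : idx D k -> 0 <= v k.
  by move=> /h hk; rewrite /v addrC -(opprK (u k)) subr_ge0; apply: le_trans hk; rewrite -normrN ler_norm.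
have Pv N : Ps v N = Ps u N + Ps c N.
  by rewrite /Ps -big_split /=; apply: eq_bigr => k _; rewrite /Qf /v; case: ifP; rewrite ?addr0.
have hv : cvgn (Ps v).
  apply: nondecreasing_is_cvgn; first exact: Ps_mono.
  exists (M + M) => _ [N _ <-]; rewrite Pv lerD //.
  apply: le_trans (hM N); apply: ler_sum => k _; rewrite /Qf; case: ifP => // /h.
  exact: le_trans (ler_norm _).
exists (limn (Ps v) - limn (Ps c)).
rewrite /rs; have -> : Ps u = (Ps v - Ps c) by apply/funext => N; rewrite !fctE Pv addrK.
exact: cvgB.
Qed.

Lemma rs_tail u s c C : (forall k, idx D k -> `|u k| <= c k) -> rs u s -> rs c C ->
  forall N, `|s - Ps u N| <= C - Ps c N.
Proof.
move=> h hu hc N.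
have hf : ((fun M => `|Ps u M - Ps u N|) @ \oo --> `|s - Ps u N|)%classic.
  by apply: cvg_norm; apply: cvgB => //; exact: cvg_cst.
apply: (ler_cvg_to hf (cvg_cst (C - Ps c N))).
near=> M.
have hNM : (N <= M)%N by near: M; exact: nbhs_infty_ge.
apply: le_trans (Ps_diff_le h hNM) _.
rewrite lerD2r; apply: Ps_le_lim => // k /h; apply: le_trans.
Unshelve. all: by end_near.
Qed.

Lemma rs_unique u s t : rs u s -> rs u t -> s = t.
Proof.
move=> hs ht; apply/le_anti/andP; split; apply: ler_cvg_to hs ht _ || apply: ler_cvg_to ht hs _;
  by near=> M.
Unshelve. all: by end_near.
Qed.
Lemma Ps0 u : Ps u 0 = 0.
Proof. by rewrite /Ps big_geq. Qed.

Lemma Ps_norm u w N : (forall k, idx D k -> `|u k| <= w k) -> `|Ps u N| <= Ps w N.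
Proof. by move=> h; have := Ps_diff_le h (leq0n N); rewrite !Ps0 !subr0. Qed.

Lemma Ps_Ml a u N : Ps (fun k => a * u k) N = a * Ps u N.
Proof. by rewrite /Ps mulr_sumr; apply: eq_bigr => k _; rewrite /Qf; case: ifP; rewrite ?mulr0. Qed.

Lemma Ps_fin d : D = Some d -> forall u N, (d <= N)%N -> Ps u N = Ps u d.
Proof.
move=> E u N dN; rewrite (Ps_split u dN) big_nat_cond big1 ?addr0 //.
by move=> k /andP[/andP[dk _] _]; rewrite /Qf /idx E ltnNge dk.
Qed.

End Real.

Section Cplx.
Variable R : realType.
Variable D : option nat.
Local Notation C := (R[i]).
Local Notation Re := (@complex.Re R).
Local Notation Im := (@complex.Im R).

Lemma p_psum (p : C -> R) : p 0 = 0 -> (forall x y, p (x + y) = p x + p y) ->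
  forall f N, p (psum D f N) = Ps D (fun k => p (f k)) N.
Proof.
move=> p0 pD f N; rewrite /psum /Ps -big_mkord big_mkcond /=.
elim: N => [|N IH]; first by rewrite !big_geq.
by rewrite !big_nat_recr //= pD IH /Qf; case: ifP => _; rewrite ?p0.
Qed.

Lemma ReD (x y : C) : Re (x + y) = Re x + Re y. Proof. by case: x; case: y. Qed.
Lemma ImD (x y : C) : Im (x + y) = Im x + Im y. Proof. by case: x; case: y. Qed.

Lemma sum_toP (f : nat -> C) s : sum_to D f s <->
  rs D (fun k => Re (f k)) (Re s) /\ rs D (fun k => Im (f k)) (Im s).
Proof.
rewrite /sum_to /rs.
have -> : (fun N => Re (psum D f N)) = Ps D (fun k => Re (f k)).
  by apply/funext => N; apply: p_psum => //; exact: ReD.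
have -> : (fun N => Im (psum D f N)) = Ps D (fun k => Im (f k)).
  by apply/funext => N; apply: p_psum => //; exact: ImD.
by [].
Qed.

Lemma C_ex (f : nat -> C) c M : (forall k, idx D k -> `|Re (f k)| <= c k /\ `|Im (f k)| <= c k) ->
  (forall N, Ps D c N <= M) -> exists s, sum_to D f s.
Proof.
move=> h hM.
have [a ha] := rs_ex (u := fun k => Re (f k)) (fun k ik => (h k ik).1) hM.
have [b hb] := rs_ex (u := fun k => Im (f k)) (fun k ik => (h k ik).2) hM.
by exists (a +i* b)%C; apply/sum_toP.
Qed.

Lemma fin_ex d (f : nat -> C) : D = Some d -> exists s, sum_to D f s.
Proof.
move=> E; apply: (@C_ex f (fun k => `|Re (f k)| + `|Im (f k)|)
  (Ps D (fun k => `|Re (f k)| + `|Im (f k)|) d)).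
  by move=> k _; rewrite lerDl lerDr !normr_ge0.
move=> N; case: (leqP d N) => dN; first by rewrite (Ps_fin E _ dN).
apply: Ps_mono; last exact: ltnW.
by move=> k _; rewrite addr_ge0.
Qed.

Lemma inner_tail (p : C -> R) (Fk : nat -> C) (ck : R) c Cc gk :
  (forall l, idx D l -> `|p (Fk l)| <= ck * c l) -> rs D c Cc ->
  rs D (fun l => p (Fk l)) (p gk) ->
  forall N, `|p gk - Ps D (fun l => p (Fk l)) N| <= ck * (Cc - Ps D c N).
Proof.
move=> h hc hg N.
have hc' : rs D (fun l => ck * c l) (ck * Cc).
  rewrite /rs; have -> : Ps D (fun l => ck * c l) = (fun N => ck * Ps D c N).
    by apply/funext => M; rewrite Ps_Ml.
  exact: (@cvgMl_tmp _ _ _ _ (Ps D c) ck Cc hc).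
by have := rs_tail h hg hc' N; rewrite Ps_Ml mulrBr.
Qed.

Lemma diag_p (p : C -> R) (F : nat -> nat -> C) (c : nat -> R) Cc g t :
  p 0 = 0 -> (forall x y, p (x + y) = p x + p y) ->
  (forall k, idx D k -> 0 <= c k) ->
  (forall k l, idx D k -> idx D l -> `|p (F k l)| <= c k * c l) ->
  rs D c Cc ->
  (forall k, rs D (fun l => p (F k l)) (p (g k))) ->
  rs D (fun k => p (g k)) (p t) ->
  ((fun K => p (psum D (fun k => psum D (F k) K) K)) @ \oo --> p t)%classic.
Proof.
move=> p0 pD c0 hF hc hg ht.
pose d K := Ps D (fun k => p (psum D (F k) K) - p (g k)) K.
have eq K : p (psum D (fun k => psum D (F k) K) K) = d K + Ps D (fun k => p (g k)) K.
  rewrite p_psum // /d /Ps -big_split /=; apply: eq_bigr => k _.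
  by rewrite /Qf; case: ifP => _; rewrite ?subrK ?addr0.
have Cc0 : 0 <= Cc by have := Ps_le_lim c0 hc 0; rewrite Ps0.
have bd K : `|d K| <= Cc * (Cc - Ps D c K).
  have X0 : 0 <= Cc - Ps D c K by rewrite subr_ge0; exact: Ps_le_lim.
  rewrite /d; apply: (le_trans (Ps_norm (w := fun k => c k * (Cc - Ps D c K)) K _)).
    move=> k ik; rewrite distrC p_psum //.
    exact: (inner_tail (hF k ^~ ik) hc (hg k)).
  have -> : Ps D (fun k => c k * (Cc - Ps D c K)) K = Ps D c K * (Cc - Ps D c K).
    by rewrite /Ps mulr_suml; apply: eq_bigr => k _; rewrite /Qf; case: ifP; rewrite ?mul0r.
  by apply: ler_wpM2r => //; exact: Ps_le_lim.
have h0 : ((fun K => Cc * (Cc - Ps D c K)) @ \oo --> 0)%classic.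
  rewrite -(mulr0 Cc) -(subrr Cc).
  apply: (@cvgMl_tmp _ _ _ _ (fun K => Cc - Ps D c K) Cc (Cc - Cc)).
  exact: (cvgB (cvg_cst Cc) hc).
have d0 : (d @ \oo --> 0)%classic.
  apply: (@squeeze_cvgr _ _ _ _ (fun K => - (Cc * (Cc - Ps D c K))) (fun K => Cc * (Cc - Ps D c K))).
  - by near=> K; rewrite -ler_norml; exact: bd.
  - by rewrite -oppr0; apply: cvgN.
  - exact: h0.
have -> : (fun K => p (psum D (fun k => psum D (F k) K) K)) = d + Ps D (fun k => p (g k)).
  by apply/funext => K; rewrite eq.
by rewrite -[p t]add0r; apply: cvgD.
Unshelve. all: by end_near.
Qed.

Lemma dsum_ex (F : nat -> nat -> C) (c : nat -> R) Cc :
  (forall k, idx D k -> 0 <= c k) ->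
  (forall k l, idx D k -> idx D l ->
     `|Re (F k l)| <= c k * c l /\ `|Im (F k l)| <= c k * c l) ->
  rs D c Cc ->
  exists t, dsum_to D F t /\
   ((fun K => Re (psum D (fun k => psum D (F k) K) K)) @ \oo --> Re t)%classic /\
   ((fun K => Im (psum D (fun k => psum D (F k) K) K)) @ \oo --> Im t)%classic.
Proof.
move=> c0 hF hc.
have Cc0 : 0 <= Cc by have := Ps_le_lim c0 hc 0; rewrite Ps0.
have hin : forall k, exists s, sum_to D (F k) s.
  move=> k; case ik: (idx D k).
    apply: (@C_ex (F k) (fun l => c k * c l) (c k * Cc)).
      by move=> l il; exact: hF.
    by move=> N; rewrite Ps_Ml; apply: ler_wpM2l; [exact: c0 | exact: Ps_le_lim].
  move: ik; rewrite /idx; case E: D => [d|] // _; rewrite -E; exact: fin_ex E.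
have [g hg] := boolp.choice hin.
have gb k : idx D k -> `|Re (g k)| <= c k * Cc /\ `|Im (g k)| <= c k * Cc.
  move=> ik; have [hr hi] := (sum_toP (F k) (g k)).1 (hg k).
  split.
    by have := inner_tail (fun l il => (hF k l ik il).1) hc hr 0; rewrite !Ps0 !subr0.
  by have := inner_tail (fun l il => (hF k l ik il).2) hc hi 0; rewrite !Ps0 !subr0.
have [t ht] : exists t, sum_to D g t.
  apply: (@C_ex g (fun k => c k * Cc) (Cc * Cc) gb) => N.
  have -> : (fun k => c k * Cc) = (fun k => Cc * c k) by apply/funext => k; rewrite mulrC.
  by rewrite Ps_Ml; apply: ler_wpM2l => //; exact: Ps_le_lim.
exists t; split; first by exists g.
have [hr hi] := (sum_toP g t).1 ht.
split.
  exact: (@diag_p (@complex.Re R) F c Cc g t (erefl) (@ReD) c0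
    (fun k l ik il => (hF k l ik il).1) hc (fun k => ((sum_toP _ _).1 (hg k)).1) hr).
exact: (@diag_p (@complex.Im R) F c Cc g t (erefl) (@ImD) c0
    (fun k l ik il => (hF k l ik il).2) hc (fun k => ((sum_toP _ _).1 (hg k)).2) hi).
Qed.

Lemma Ps_le (u v : nat -> R) N : (forall k, idx D k -> u k <= v k) -> Ps D u N <= Ps D v N.
Proof. by move=> h; apply: ler_sum => k _; rewrite /Qf; case: ifP => // /h. Qed.

Lemma Ps_D (u v : nat -> R) N : Ps D (fun k => u k + v k) N = Ps D u N + Ps D v N.
Proof. by rewrite /Ps -big_split; apply: eq_bigr => k _; rewrite /Qf; case: ifP => _ /=; rewrite ?addr0. Qed.

Lemma Ps_Mr (a : R) (u : nat -> R) N : Ps D (fun k => u k * a) N = Ps D u N * a.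
Proof. by rewrite /Ps mulr_suml; apply: eq_bigr => k _; rewrite /Qf; case: ifP; rewrite ?mul0r. Qed.

Lemma Ps_ext (u v : nat -> R) N : (forall k, idx D k -> u k = v k) -> Ps D u N = Ps D v N.
Proof. by move=> h; apply: eq_bigr => k _; rewrite /Qf; case: ifP => // /h. Qed.

Lemma rs_ext (u v : nat -> R) s : (forall k, idx D k -> u k = v k) -> rs D u s -> rs D v s.
Proof.
move=> h; rewrite /rs; have -> // : Ps D u = Ps D v.
by apply/funext => N; exact: Ps_ext.
Qed.

Lemma term_le (u : nat -> R) s k : (forall k, idx D k -> 0 <= u k) -> rs D u s -> idx D k -> u k <= s.
Proof.
move=> h hs ik; apply: le_trans (Ps_le_lim h hs k.+1).
by rewrite /Ps big_nat_recr //= /Qf ik lerDr; apply: sumr_ge0 => j _; case: ifP => // /h.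
Qed.

Lemma lim_uniq (f : nat -> R) (a b : R) : (f @ \oo --> a)%classic -> (f @ \oo --> b)%classic -> a = b.
Proof.
move=> ha hb; apply/le_anti/andP; split; [apply: ler_cvg_to ha hb _ | apply: ler_cvg_to hb ha _];
  by near=> M.
Unshelve. all: by end_near.
Qed.

Lemma sum_to_ext (f h : nat -> C) s : (forall k, idx D k -> f k = h k) -> sum_to D f s -> sum_to D h s.
Proof.
move=> e /sum_toP[hr hi]; apply/sum_toP; split.
  by apply: rs_ext hr => k ik; rewrite e.
by apply: rs_ext hi => k ik; rewrite e.
Qed.

Lemma ReB (x y : C) : Re (x - y) = Re x - Re y. Proof. by case: x; case: y. Qed.
Lemma ImB (x y : C) : Im (x - y) = Im x - Im y. Proof. by case: x; case: y. Qed.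

Lemma sum_toB (f h : nat -> C) s t : sum_to D f s -> sum_to D h t ->
  sum_to D (fun k => f k - h k) (s - t).
Proof.
move=> /sum_toP[fr fi] /sum_toP[hr hi]; apply/sum_toP; rewrite ReB ImB /rs; split.
  have -> : Ps D (fun k => Re (f k - h k)) = Ps D (fun k => Re (f k)) - Ps D (fun k => Re (h k)).
    apply/funext => N; rewrite !fctE -[X in _ = _ + X]mulN1r -Ps_Ml -Ps_D.
    by apply: Ps_ext => k _; rewrite ReB mulN1r.
  exact: (cvgB fr hr).
have -> : Ps D (fun k => Im (f k - h k)) = Ps D (fun k => Im (f k)) - Ps D (fun k => Im (h k)).
  apply/funext => N; rewrite !fctE -[X in _ = _ + X]mulN1r -Ps_Ml -Ps_D.
  by apply: Ps_ext => k _; rewrite ImB mulN1r.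
exact: (cvgB fi hi).
Qed.

Lemma rs_cst0 (u : nat -> R) : (forall k, idx D k -> u k = 0) -> rs D u 0.
Proof.
move=> h; rewrite /rs; have -> : Ps D u = fun=> 0.
  apply/funext => N; rewrite /Ps big1 // => k _; rewrite /Qf; case: ifP => // ik; exact: h.
exact: (cvg_cst (0 : R)).
Qed.

Lemma sum_ge0 (f : nat -> C) s : sum_to D f s -> (forall k, idx D k -> 0 <= f k) -> 0 <= s.
Proof.
move=> /sum_toP[hr hi] h; rewrite lecE; apply/andP; split.
  apply/eqP; apply: (lim_uniq hi); apply: rs_cst0 => k /h; exact: ger0_Im.
have := Ps_le_lim _ hr 0; rewrite Ps0; apply => k /h; by rewrite lecE => /andP[].
Qed.

Lemma Ps_delta (u : nat -> R) k N : (forall l, l != k -> u l = 0) -> (k < N)%N ->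
  Ps D u N = Qf D u k.
Proof.
move=> h kN; rewrite /Ps (bigD1_seq k) ?mem_iota ?iota_uniq /=.
rewrite big1 ?addr0 // => l lk; rewrite /Qf h //; by case: ifP.
  by rewrite subn0.
by [].
Qed.

Lemma rs_delta (u : nat -> R) k : (forall l, l != k -> u l = 0) -> rs D u (Qf D u k).
Proof.
move=> h; rewrite /rs.
have H : \forall N \near \oo%classic, Ps D u N = Qf D u k.
  near=> N; apply: Ps_delta h _; near: N; exact: nbhs_infty_gt.
exact: (cvg_near_cst _ H).
Unshelve. all: by end_near.
Qed.

Lemma delta_sum k (z : C) : sum_to D (fun l => if k == l then z else 0) (if idx D k then z else 0).
Proof.
have e1 : Re (if idx D k then z else 0) = Qf D (fun l => Re (if k == l then z else 0)) k.
  by rewrite /Qf eqxx; case: ifP.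
have e2 : Im (if idx D k then z else 0) = Qf D (fun l => Im (if k == l then z else 0)) k.
  by rewrite /Qf eqxx; case: ifP.
apply/sum_toP; rewrite e1 e2; split; apply: rs_delta => l lk; by rewrite eq_sym (negbTE lk).
Qed.

Lemma real_quad (A Dd b : R) : 0 <= A -> 0 <= Dd -> 0 <= b ->
  0 <= A * (A * Dd - b) -> 0 <= Dd * (A * Dd - b) -> 0 <= A * b - 2 * b + Dd ->
  b <= A * Dd.
Proof.
move=> hA hD hb h1 h2 h3.
case: (ltrP 0 A) => hA'.
  by rewrite -subr_ge0; move: h1; rewrite pmulr_rge0.
case: (ltrP 0 Dd) => hD'.
  by rewrite -subr_ge0; move: h2; rewrite pmulr_rge0.
have A0 : A = 0 by apply/le_anti/andP.
have D0 : Dd = 0 by apply/le_anti/andP.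
move: h3; rewrite A0 D0; lra.
Qed.

Lemma psd2 (A B Cm Dd : C) :
  (forall a b : C, 0 <= a^* * (a*A + b*B) + b^* * (a*Cm + b*Dd)) ->
  [/\ complex.Im A = 0, 0 <= complex.Re A, Cm = B^* &
     (complex.Re B)^+2 + (complex.Im B)^+2 <= complex.Re A * complex.Re Dd].
Proof.
case: A => A1 A2; case: B => p q; case: Cm => r s; case: Dd => D1 D2 /= H.
have := H 1 0; have := H 0 1; have := H 1 1; have := H 1 'i%C.
rewrite !lecE /= => /andP[/eqP e1 g1] /andP[/eqP e2 g2] /andP[/eqP e3 g3] /andP[/eqP e4 g4].
have hA2 : A2 = 0 by lra.
have hD2 : D2 = 0 by lra.
have hr : r = p by lra.
have hs : s = - q by lra.
subst A2 D2 r s.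
have hA : 0 <= A1 by lra.
have hD : 0 <= D1 by lra.
split => //.
apply: real_quad => //; first by rewrite addr_ge0 ?sqr_ge0.
- have := H (- (p +i* q))%C A1%:C%C; rewrite lecE /= => /andP[_ h]; nra.
- have := H D1%:C%C ((- p) +i* q)%C; rewrite lecE /= => /andP[_ h]; nra.
- have := H (- (p +i* q))%C 1; rewrite lecE /= => /andP[_ h]; nra.
Qed.

Lemma sum_pick (f : nat -> C) N k : (k < N)%N -> idx D k ->
  \sum_(j < N | idx D j) (j == k :> nat)%:R * f j = f k.
Proof.
move=> kN ik; rewrite (bigD1 (Ordinal kN)) //= eqxx mul1r big1 ?addr0 //.
move=> j /andP[_ hj]; rewrite (_ : (nat_of_ord j == k) = false) ?mul0r //.
apply/negbTE; apply: contra hj => /eqP e; apply/eqP/val_inj => /=; exact: e.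
Qed.

Lemma Q2 (rho : nat -> nat -> C) N k l (a b : C) :
  (k < N)%N -> (l < N)%N -> idx D k -> idx D l ->
  \sum_(j < N | idx D j) \sum_(j' < N | idx D j')
     ((j == k :> nat)%:R * a + (j == l :> nat)%:R * b)^* * rho j j' * ((j' == k :> nat)%:R * a + (j' == l :> nat)%:R * b)
  = a^* * (a * rho k k + b * rho k l) + b^* * (a * rho l k + b * rho l l).
Proof.
move=> kN lN ik il.
have inner j : \sum_(j' < N | idx D j') ((j == k :> nat)%:R * a + (j == l :> nat)%:R * b)^* * rho j j' * ((j' == k :> nat)%:R * a + (j' == l :> nat)%:R * b)
   = ((j == k :> nat)%:R * a + (j == l :> nat)%:R * b)^* * (a * rho j k + b * rho j l).
  rewrite -[in RHS](sum_pick (fun j' => a * rho j j') kN ik) -[in RHS](sum_pick (fun j' => b * rho j j') lN il).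
  rewrite -big_split mulr_sumr; apply: eq_bigr => j' _; rewrite /=; ring.
rewrite (eq_bigr _ (fun (j : 'I_N) _ => inner j)).
rewrite -[in RHS](sum_pick (fun j => a^* * (a * rho j k + b * rho j l)) kN ik).
rewrite -[in RHS](sum_pick (fun j => b^* * (a * rho j k + b * rho j l)) lN il).
rewrite -big_split; apply: eq_bigr => j _.
rewrite /= rmorphD !rmorphM /= !rmorph_nat; ring.
Qed.

Lemma nrE (z : C) : `|z| = (Re `|z|)%:C%C. Proof. by []. Qed.

Lemma nr_ge0 (z : C) : 0 <= Re `|z|.
Proof. by rewrite -ler0c -nrE. Qed.

Lemma Im_le_norm (z : C) : `|Im z| <= Re `|z|.
Proof. by rewrite normc_def /= -sqrtr_sqr ler_sqrt ?addr_ge0 ?sqr_ge0 // lerDr sqr_ge0. Qed.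

Lemma re_im_bound (z : C) v : `|z| <= v%:C%C -> `|Re z| <= v /\ `|Im z| <= v.
Proof.
move=> h; split.
  by rewrite -lecR; apply: le_trans h; exact: normc_ge_Re.
by apply: le_trans (Im_le_norm z) _; move: h; rewrite [`|z|]nrE lecR.
Qed.

Lemma realC (z : C) : Im z = 0 -> z = (Re z)%:C%C.
Proof. by case: z => x y /= ->. Qed.

Lemma conj_Im0 (z : C) : z^* = z -> Im z = 0.
Proof. case: z => x y; rewrite /= => -[] h. have e : y + y = 0 by rewrite -{1}h addNr. lra. Qed.

Lemma Ps_ge0 (u : nat -> R) N : (forall k, idx D k -> 0 <= u k) -> 0 <= Ps D u N.
Proof. by move=> h; apply: sumr_ge0 => k _; rewrite /Qf; case: ifP => // /h. Qed.

Lemma main_sec (rho U : nat -> nat -> C) m n :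
  density_matrix D rho -> unitary_matrix D U -> idx D m -> idx D n ->
  exists mu_m mu_n nu nut : C,
    sum_to D (fun k => `|U m k| ^+ 2 * rho k k) mu_m /\
    sum_to D (fun k => `|U n k| ^+ 2 * rho k k) mu_n /\
    dsum_to D (fun k l => if k != l then
        U m k * (U m l)^* * (U n k)^* * U n l * `|rho k l| ^+ 2 else 0) nu /\
    dsum_to D (fun k l =>
        U m k * (U m l)^* * (U n k)^* * U n l * `|rho k l| ^+ 2) nut /\
    nu <= nut /\ nut <= mu_m * mu_n.
Proof.
move=> [psdH trH] hU im in_.
pose r k := Re (rho k k).
have psd k l : idx D k -> idx D l ->
  [/\ Im (rho k k) = 0, 0 <= Re (rho k k), rho l k = (rho k l)^* &
      (Re (rho k l))^+2 + (Im (rho k l))^+2 <= Re (rho k k) * Re (rho l l)].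
  move=> ik il; apply: psd2 => a b.
  have := psdH (maxn k l).+1 (fun j => (j == k)%:R * a + (j == l)%:R * b).
  by rewrite Q2 // ltnS ?leq_maxl ?leq_maxr.
have rhoE k : idx D k -> rho k k = (r k)%:C%C.
  move=> ik; have [h _ _ _] := psd k k ik ik; rewrite /r.
  by move: h; case: (rho k k) => x y /= ->.
have r0 k : idx D k -> 0 <= r k by move=> ik; have [] := psd k k ik ik.
have herm k l : idx D k -> idx D l -> `|rho l k| = `|rho k l|.
  by move=> ik il; have [_ _ -> _] := psd k l ik il; rewrite norm_conjC.
have rhob k l : idx D k -> idx D l -> `|rho k l| ^+ 2 <= rho k k * rho l l.
  move=> ik il; have [_ _ _ h] := psd k l ik il.
  by rewrite -add_Re2_Im2 (rhoE k ik) (rhoE l il) -rmorphM lecR.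
have tr : rs D r 1 by have [h _] := (sum_toP (fun k => rho k k) 1).1 trH.
have rowU p : idx D p -> forall k, idx D k -> 0 <= Re `|U p k| <= 1.
  move=> ip k ik.
  have h := (hU p p ip ip).1; rewrite eqxx in h.
  have [hr _] := (sum_toP _ _).1 h.
  have e j : idx D j -> Re (U p j * (U p j)^*) = (Re `|U p j|)^+2.
    by move=> _; rewrite -normCK [`|U p j|]nrE -rmorphXn.
  have := term_le (u := fun j => (Re `|U p j|)^+2) (fun j _ => sqr_ge0 _) (rs_ext e hr) ik.
  have := nr_ge0 (U p k); rewrite /= => h0 h1; apply/andP; split => //; nra.
pose am k := Re `|U m k|.
pose bn k := Re `|U n k|.
have mu_ex p : idx D p -> exists mu, sum_to D (fun k => `|U p k|^+2 * rho k k) mu /\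
    0 <= mu /\ (forall N, Ps D (fun k => (Re `|U p k|)^+2 * r k) N <= Re mu).
  move=> ip.
  have fE k : idx D k -> `|U p k|^+2 * rho k k = ((Re `|U p k|)^+2 * r k)%:C%C.
    by move=> ik; rewrite (rhoE k ik) [`|U p k|]nrE -rmorphXn -rmorphM.
  have fge k : idx D k -> 0 <= (Re `|U p k|)^+2 * r k.
    by move=> ik; rewrite mulr_ge0 ?sqr_ge0 ?r0.
  have bnd k : idx D k -> (Re `|U p k|)^+2 * r k <= r k.
    move=> ik; apply: ler_piMl; first exact: r0.
    by have /andP[h0 h1] := rowU p ip k ik; rewrite expr_le1.
  have [mu hmu] := @C_ex (fun k => `|U p k|^+2 * rho k k) (fun k => (Re `|U p k|)^+2 * r k) 1
    (fun k ik => ltac:(rewrite /= (fE k ik) /=; split; [by rewrite ger0_norm ?fge | by rewrite normr0 fge]))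
    (fun N => le_trans (Ps_le N bnd) (Ps_le_lim r0 tr N)).
  exists mu; split => //; split.
    by apply: sum_ge0 hmu _ => k ik; rewrite fE // ler0c fge.
  move=> N; have [hr _] := (sum_toP _ _).1 hmu; apply: Ps_le_lim fge (rs_ext _ hr) N.
  by move=> k ik; rewrite fE.
have [mum [hmum [mum0 mumb]]] := mu_ex m im.
have [mun [hmun [mun0 munb]]] := mu_ex n in_.
pose c k := am k * bn k * r k.
have c0 k : idx D k -> 0 <= c k by move=> ik; rewrite !mulr_ge0 ?nr_ge0 ?r0.
have cr k : idx D k -> c k <= r k.
  move=> ik; have /andP[a0 a1] := rowU m im k ik; have /andP[b0 b1] := rowU n in_ k ik.
  have := r0 k ik; rewrite /c /am /bn => rk.
  by rewrite -[leRHS]mul1r ler_wpM2r // mulr_ile1.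
have [Cc hc] := @rs_ex _ D c c 1 (fun k ik => ltac:(by rewrite ger0_norm ?c0))
  (fun N => le_trans (Ps_le N cr) (Ps_le_lim r0 tr N)).
pose F k l := U m k * (U m l)^* * (U n k)^* * U n l * `|rho k l| ^+ 2.
have hF k l : idx D k -> idx D l -> `|F k l| <= (c k * c l)%:C%C.
  move=> ik il; rewrite /F !normrM !norm_conjC !normr_id -expr2.
  have -> : (c k * c l)%:C%C = `|U m k| * `|U m l| * `|U n k| * `|U n l| * (rho k k * rho l l).
    rewrite (rhoE k ik) (rhoE l il) [`|U m k|]nrE [`|U m l|]nrE [`|U n k|]nrE [`|U n l|]nrE -!rmorphM /c /am /bn; congr (_%:C%C); ring.
  by apply: ler_wpM2l; [rewrite !mulr_ge0 | exact: rhob].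
have hFb k l : idx D k -> idx D l -> `|Re (F k l)| <= c k * c l /\ `|Im (F k l)| <= c k * c l.
  by move=> ik il; apply: re_im_bound; exact: hF.
have [nut [hnut [hRe hIm]]] := dsum_ex c0 hFb hc.
have Fconj k l : idx D k -> idx D l -> (F k l)^* = F l k.
  move=> ik il; rewrite /F (herm k l ik il) !normCK !rmorphM /= !conjCK; ring.
have SR K : Im (psum D (fun k => psum D (F k) K) K) = 0.
  apply: conj_Im0; rewrite /psum rmorph_sum.
  under eq_bigr do rewrite rmorph_sum.
  rewrite exchange_big; apply: eq_bigr => l il; apply: eq_bigr => k ik.
  exact: Fconj.
have Im0 : Im nut = 0.
  apply: (lim_uniq hIm); rewrite (_ : (fun K => _) = fun=> 0); last by apply/funext => K; exact: SR.
  exact: (cvg_cst (0 : R)).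
pose X k := am k ^+ 2 * r k.
pose Y k := bn k ^+ 2 * r k.
have ReS K : Re (psum D (fun k => psum D (F k) K) K) <= Re mum * Re mun.
  rewrite (@p_psum Re erefl (@ReD)).
  rewrite (Ps_ext (v := fun k => Ps D (fun l => Re (F k l)) K)); last first.
    by move=> k _; rewrite (@p_psum Re erefl (@ReD)).
  apply: (@le_trans _ _ (Ps D X K * Ps D Y K)).
    apply: (@le_trans _ _ (Ps D (fun k => Ps D (fun l => (X k * Y l + Y k * X l) / 2) K) K)).
      apply: Ps_le => k ik; apply: Ps_le => l il.
      have [h _] := hFb k l ik il.
      have hz := ler_norm (Re (F k l)).
      have := r0 k ik; have := r0 l il.
      have := nr_ge0 (U m k); have := nr_ge0 (U m l); have := nr_ge0 (U n k); have := nr_ge0 (U n l).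
      have hint : 0 <= r k * r l * (am k * bn l - bn k * am l) ^+ 2.
        by apply: mulr_ge0; [apply: mulr_ge0; exact: r0 | exact: sqr_ge0].
      move: h hz hint; rewrite /c /X /Y /am /bn => h hz hint *; nra.
    rewrite (Ps_ext (v := fun k => (X k * Ps D Y K + Y k * Ps D X K) / 2)); last first.
      move=> k _; rewrite Ps_Mr Ps_D Ps_Ml Ps_Ml //.
    rewrite Ps_Mr Ps_D Ps_Mr Ps_Mr.
    rewrite le_eqVlt; apply/orP; left; apply/eqP; field; by [].
  have hX : 0 <= Ps D X K.
    by apply: Ps_ge0 => k ik; apply: mulr_ge0; [exact: sqr_ge0 | exact: r0].
  have hY : 0 <= Ps D Y K.
    by apply: Ps_ge0 => k ik; apply: mulr_ge0; [exact: sqr_ge0 | exact: r0].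
  exact: (ler_pM hX hY (mumb K) (munb K)).
have ReN : Re nut <= Re mum * Re mun.
  apply: (ler_cvg_to hRe (cvg_cst (Re mum * Re mun))).
  by near=> K; exact: ReS.
have Cc0 : 0 <= Cc by have := Ps_le_lim c0 hc 0; rewrite Ps0.
have [dg hdg] : exists dg, sum_to D (fun k => F k k) dg.
  apply: (@C_ex (fun k => F k k) (fun k => c k * c k) (Cc * Cc)).
    by move=> k ik; exact: hFb.
  move=> N; apply: (@le_trans _ _ (Ps D (fun k => Cc * c k) N)).
    apply: Ps_le => k ik; apply: ler_wpM2r; first exact: c0.
    exact: term_le c0 hc ik.
  by rewrite Ps_Ml; apply: ler_wpM2l => //; exact: Ps_le_lim.
have dg0 : 0 <= dg.
  apply: sum_ge0 hdg _ => k ik.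
  have -> : F k k = `|U m k|^+2 * `|U n k|^+2 * `|rho k k|^+2.
    by rewrite /F !normCK; ring.
  by rewrite !mulr_ge0 ?exprn_ge0.
have [dgI dgR] : Im dg = 0 /\ 0 <= Re dg.
  by move: dg0; rewrite lecE => /andP[/eqP -> ->].
case: hnut => g [hg hgt].
exists mum, mun, (nut - dg), nut.
split => //; split => //; split; last split.
- exists (fun k => g k - (if idx D k then F k k else 0)); split.
    move=> k; apply: sum_to_ext (sum_toB (hg k) (delta_sum k (F k k))) => l _.
    case: (eqVneq k l) => [<-|nkl]; first by rewrite subrr.
    by rewrite ?nkl /= ?(negbTE nkl) subr0.
  apply: sum_toB hgt (sum_to_ext _ hdg).
  by move=> k ->.
- by exists g.
split.
  rewrite lecE ImB ReB dgI subr0 eqxx /=; lra.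
rewrite (realC (ger0_Im mum0)) (realC (ger0_Im mun0)) -rmorphM lecE /= Im0 eqxx /=.
exact: ReN.
Unshelve. all: by end_near.
Qed.

End Cplx.

Theorem lemma2 (R : realType) (D : option nat)
    (rho U : nat -> nat -> R[i]) :
  density_matrix D rho -> unitary_matrix D U ->
  forall m n, idx D m -> idx D n ->
  exists mu_m mu_n nu nut : R[i],
    sum_to D (fun k => `|U m k| ^+ 2 * rho k k) mu_m /\
    sum_to D (fun k => `|U n k| ^+ 2 * rho k k) mu_n /\
    dsum_to D (fun k l => if k != l then
        U m k * (U m l)^* * (U n k)^* * U n l * `|rho k l| ^+ 2 else 0) nu /\
    dsum_to D (fun k l =>
        U m k * (U m l)^* * (U n k)^* * U n l * `|rho k l| ^+ 2) nut /\
    nu <= nut /\ nut <= mu_m * mu_n.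
Proof. by move=> hr hu m n im in_; apply: main_sec. Qed.
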